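(* On the triangle graph on $X=\{0,1,2\}$ over $\mathbb{F}_2$ with exterior algebra $\Omega_{min}=\Omega(\mathbb{Z}_3)$, the unique quantum metric $g=e^+\otimes e^-+e^-\otimes e^+$ has exactly four QLCs, given by $\nabla e^+=\alpha\, e^-\otimes e^-$, $\nabla e^-=\beta\, e^+\otimes e^+$ for $\alpha,\beta\in\{0,1\}$. These have curvature $R_\nabla e^\pm=\alpha\beta\,\mathrm{Vol}\otimes e^\pm$, Ricci tensors ${\rm Ricci}_+=\alpha\beta\, e^-\otimes e^+$, ${\rm Ricci}_-=\alpha\beta\, e^+\otimes e^-$ (for the lifts $i_+$, $i_-$ respectively) and Ricci scalars $S_\pm=\alpha\beta$.
   Context: $A=\mathbb{F}_2(\mathbb{Z}_3)$, functions on $\{0,1,2\}$; $(R_\pm f)(i)=f(i\pm1)$ mod 3. The calculus of the triangle graph (all arrows $i\to i\pm1$) has left-invariant basis $e^+=\sum_i i\to i+1$, $e^-=\sum_i i\to i-1$ over $A$, with $e^\pm f=(R_\pm f)e^\pm$ and ${\rm d} f=(R_+f+f)e^++(R_-f+f)e^-$. $\Omega^1\otimes_A\Omega^1$ is free with basis $e^a\otimes e^b$. $\Omega(\mathbb{Z}_3)$ is the exterior algebra generated by $A$ and $e^\pm$ with the additional relations $(e^\pm)^2=0$, $e^+\wedge e^-+e^-\wedge e^+=0$, ${\rm d} e^\pm=0$; $\Omega^2$ is spanned over $A$ by $\mathrm{Vol}=e^+\wedge e^-$. A bimodule connection is a linear $\nabla:\Omega^1\to\Omega^1\otimes_A\Omega^1$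 with $\nabla(f\omega)={\rm d} f\otimes\omega+f\nabla\omega$ and $\nabla(\omega f)=(\nabla\omega)f+\sigma(\omega\otimes{\rm d} f)$ for a bimodule map $\sigma$; it is a QLC if torsion $T_\nabla=\wedge\nabla-{\rm d}$ vanishes and $(\nabla\otimes\mathrm{id}+(\sigma\otimes\mathrm{id})(\mathrm{id}\otimes\nabla))g=0$. Curvature $R_\nabla=({\rm d}\otimes\mathrm{id}-(\wedge\otimes\mathrm{id})(\mathrm{id}\otimes\nabla))\nabla$. Inverse metric: the bimodule map with $(e^\pm,e^\mp)=1$, $(e^\pm,e^\pm)=0$. Lifts $i_\pm:\Omega^2\to\Omega^1\otimes_A\Omega^1$ are the bimodule maps with $i_\pm(\mathrm{Vol})=e^\pm\otimes e^\mp$; ${\rm Ricci}_\pm=((\ ,\ )\otimes\mathrm{id})(\mathrm{id}\otimes(i_\pm\otimes\mathrm{id})R_\nabla)g$ and $S_\pm=(\ ,\ ){\rm Ricci}_\pm$. *)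

(* Defs.v *)
From HB Require Import structures.
From mathcomp Require Import all_boot all_order all_algebra.
Set Implicit Arguments. Unset Strict Implicit. Unset Printing Implicit Defensive.
Import GRing.Theory.
Local Open Scope ring_scope.

Definition A := {ffun 'Z_3 -> 'F_2}.
Definition cst (c : 'F_2) : A := [ffun _ => c].
Definition amul (f g : A) : A := [ffun i => f i * g i].

Definition shift (s : bool) (f : A) : A :=
  [ffun i : 'Z_3 => f (if s then i + 1 else i - 1)].

(* Index convention: true = "+", false = "-".
   Omega^1 is free as a left A-module on e^+, e^-; an element is the
   coefficient function a |-> omega_a, meaning sum_a omega_a e^a.
   Omega^1 (x)_A Omega^1 (etc.) is free on e^a (x) e^b (etc.).
   Omega^2 is free on Vol = e^+ /\ e^-; Omega^2 (x)_A Omega^1 is free on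
   Vol (x) e^c. *)
Definition Om1 := {ffun bool -> A}.
Definition Om2 := A.
Definition Om11 := {ffun bool * bool -> A}.
Definition Om111 := {ffun bool * bool * bool -> A}.
Definition Om1111 := {ffun bool * bool * bool * bool -> A}.
Definition Om21 := {ffun bool -> A}.

Definition e (s : bool) : Om1 := [ffun a => cst (if a == s then 1 else 0)].
Definition ee (s t : bool) : Om11 :=
  [ffun ab => cst (if ab == (s, t) then 1 else 0)].

(* bimodule structures: left action is coefficientwise, right action uses
   e^a f = (R_a f) e^a *)
Definition lact1 (f : A) (w : Om1) : Om1 := [ffun a => amul f (w a)].
Definition ract1 (w : Om1) (f : A) : Om1 := [ffun a => amul (w a) (shift a f)].
Definition lact2 (f : A) (T : Om11) : Om11 := [ffun ab => amul f (T ab)].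
Definition ract2 (T : Om11) (f : A) : Om11 :=
  [ffun ab => amul (T ab) (shift ab.1 (shift ab.2 f))].

Definition d0 (f : A) : Om1 := [ffun a => shift a f + f].

(* tensor products over A, computed with e^a f = (R_a f) e^a *)
Definition tens11 (w v : Om1) : Om11 :=
  [ffun ab => amul (w ab.1) (shift ab.1 (v ab.2))].
Definition tens21 (T : Om11) (v : Om1) : Om111 :=
  [ffun abc => amul (T abc.1) (shift abc.1.1 (shift abc.1.2 (v abc.2)))].
Definition tens12 (w : Om1) (T : Om11) : Om111 :=
  [ffun abc => amul (w abc.1.1) (shift abc.1.1 (T (abc.1.2, abc.2)))].
Definition tens13 (w : Om1) (X : Om111) : Om1111 :=
  [ffun abcd => amul (w abcd.1.1.1)
                  (shift abcd.1.1.1 (X (abcd.1.1.2, abcd.1.2, abcd.2)))].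
(* (kappa Vol) (x) v, using Vol f = e^+ e^- f = (R_+ R_- f) Vol *)
Definition tens2_1 (k : Om2) (v : Om1) : Om21 :=
  [ffun c => amul k (shift true (shift false (v c)))].

(* wedge: (e^±)^2 = 0, e^+ /\ e^- = Vol, e^- /\ e^+ = - Vol *)
Definition wedge (T : Om11) : Om2 := T (true, false) - T (false, true).
(* d on Omega^1: d(f e^a) = d f /\ e^a  (since d e^a = 0) *)
Definition d1 (w : Om1) : Om2 := \sum_(a : bool) wedge (tens11 (d0 (w a)) (e a)).

Definition wedge_id (X : Om111) : Om21 :=
  [ffun c => X (true, false, c) - X (false, true, c)].

(* sigma (x) id, using X = sum_c (sum_ab X_abc e^a(x)e^b) (x) e^c *)
Definition sigma_id (sigma : Om11 -> Om11) (X : Om111) : Om111 :=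
  \sum_(c : bool) tens21 (sigma [ffun ab => X (ab.1, ab.2, c)]) (e c).

(* For T in Omega^1(x)Omega^1 written as T = sum_ab (T_ab e^a) (x) e^b,
   apply an operation F defined on simple tensors xi (x) eta. *)
Definition apply11 (X : zmodType) (F : Om1 -> Om1 -> X) (T : Om11) : X :=
  \sum_(a : bool) \sum_(b : bool) F (lact1 (T (a, b)) (e a)) (e b).

Definition is_bimod_map (sigma : Om11 -> Om11) : Prop :=
  (forall x y, sigma (x + y) = sigma x + sigma y) /\
  (forall f x, sigma (lact2 f x) = lact2 f (sigma x)) /\
  (forall f x, sigma (ract2 x f) = ract2 (sigma x) f).

Definition is_bimod_map_A (ip : Om11 -> A) : Prop :=
  (forall x y, ip (x + y) = ip x + ip y) /\
  (forall f x, ip (lact2 f x) = amul f (ip x)) /\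
  (forall f x, ip (ract2 x f) = amul (ip x) f).

(* Quantum metric: g with a bimodule inverse ( , ) such that
   ((w, g^1) g^2 = w = g^1 (g^2, w), and quantum symmetric: /\(g) = 0. *)
Definition is_quantum_metric (g : Om11) : Prop :=
  wedge g = 0 /\
  exists ip : Om11 -> A, is_bimod_map_A ip /\
    (forall w : Om1, apply11 (fun xi eta => lact1 (ip (tens11 w xi)) eta) g = w) /\
    (forall w : Om1, apply11 (fun xi eta => ract1 xi (ip (tens11 eta w))) g = w).

Definition gmet : Om11 := ee true false + ee false true.

Definition ipc (a b : bool) : A := cst (if a != b then 1 else 0).
Definition ip (T : Om11) : A := \sum_(a : bool) \sum_(b : bool) amul (T (a, b)) (ipc a b).
Definition ip_id (X : Om1111) : Om11 :=
  [ffun cd => ip [ffun ab => X (ab.1, ab.2, cd.1, cd.2)]].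

Definition is_bimod_conn (nabla : Om1 -> Om11) (sigma : Om11 -> Om11) : Prop :=
  (forall w v, nabla (w + v) = nabla w + nabla v) /\
  (forall f w, nabla (lact1 f w) = tens11 (d0 f) w + lact2 f (nabla w)) /\
  (forall f w, nabla (ract1 w f) = ract2 (nabla w) f + sigma (tens11 w (d0 f))).

Definition torsion (nabla : Om1 -> Om11) (w : Om1) : Om2 := wedge (nabla w) - d1 w.

(* (nabla (x) id + (sigma (x) id)(id (x) nabla)) g *)
Definition metric_compat_term (nabla : Om1 -> Om11) (sigma : Om11 -> Om11)
  (g : Om11) : Om111 :=
  apply11 (fun xi eta => tens21 (nabla xi) eta + sigma_id sigma (tens12 xi (nabla eta))) g.

Definition is_QLC (nabla : Om1 -> Om11) (g : Om11) : Prop :=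
  exists sigma, is_bimod_map sigma /\ is_bimod_conn nabla sigma /\
    (forall w, torsion nabla w = 0) /\ metric_compat_term nabla sigma g = 0.

(* Curvature R = (d (x) id - (wedge (x) id)(id (x) nabla)) nabla *)
Definition curvature (nabla : Om1 -> Om11) (w : Om1) : Om21 :=
  apply11 (fun xi eta => tens2_1 (d1 xi) eta - wedge_id (tens12 xi (nabla eta)))
    (nabla w).

Definition ilift (s : bool) (k : Om2) : Om11 := lact2 k (ee s (~~ s)).
Definition ilift_id (s : bool) (Y : Om21) : Om111 :=
  \sum_(c : bool) tens21 (ilift s (Y c)) (e c).

(* Ricci_± = (( , ) (x) id)(id (x) (i_± (x) id) R) g, S_± = ( , ) Ricci_± *)
Definition Ricci (s : bool) (nabla : Om1 -> Om11) (g : Om11) : Om11 :=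
  ip_id (apply11 (fun xi eta => tens13 xi (ilift_id s (curvature nabla eta))) g).
Definition Rscalar (s : bool) (nabla : Om1 -> Om11) (g : Om11) : A :=
  ip (Ricci s nabla g).

(* Main.v *)
Require Import Defs.
From mathcomp Require Import all_boot all_order all_algebra.
From mathcomp Require Import ring.
Set Implicit Arguments. Unset Strict Implicit. Unset Printing Implicit Defensive.
Import GRing.Theory.
Local Open Scope ring_scope.

Lemma F2_cases (x : 'F_2) : x = 0 \/ x = 1.
Proof. case: x => [[|[|//]]] H; [left|right]; exact: val_inj. Qed.

Lemma F2_opp (x : 'F_2) : - x = x.
Proof. by case: (F2_cases x) => ->; apply/eqP. Qed.

Lemma F2_add (x y : 'F_2) : x + y = x - y.
Proof. by rewrite F2_opp. Qed.

Lemma F2_xx (x : 'F_2) : x + x = 0.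
Proof. by case: (F2_cases x) => ->; apply/eqP. Qed.

Lemma Z3_pp (i : 'Z_3) : i + 1 + 1 = i - 1.
Proof. by case: i => [[|[|[|//]]] Hi]; apply/eqP. Qed.
Lemma Z3_mm (i : 'Z_3) : i - 1 - 1 = i + 1.
Proof. by case: i => [[|[|[|//]]] Hi]; apply/eqP. Qed.
Lemma Z3_n1 (i : 'Z_3) : (i + 1 == i) = false. Proof. by case: i => [[|[|[|//]]] Hi]. Qed.
Lemma Z3_n2 (i : 'Z_3) : (i - 1 == i) = false. Proof. by case: i => [[|[|[|//]]] Hi]. Qed.
Lemma Z3_n3 (i : 'Z_3) : (i == i + 1) = false. Proof. by case: i => [[|[|[|//]]] Hi]. Qed.
Lemma Z3_n4 (i : 'Z_3) : (i == i - 1) = false. Proof. by case: i => [[|[|[|//]]] Hi]. Qed.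
Lemma Z3_n5 (i : 'Z_3) : (i + 1 == i - 1) = false. Proof. by case: i => [[|[|[|//]]] Hi]. Qed.
Lemma Z3_n6 (i : 'Z_3) : (i - 1 == i + 1) = false. Proof. by case: i => [[|[|[|//]]] Hi]. Qed.
Lemma Z3_cases (i : 'Z_3) : i = 0 \/ i = 0 + 1 \/ i = 0 - 1.
Proof.
case: i => [[|[|[|//]]] Hi]; [left|right;left|right;right]; exact: val_inj.
Qed.

Ltac f2gen := repeat match goal with |- context [@fun_of_fin ?aT ?rT ?ph ?T ?i] =>
  case: (F2_cases (@fun_of_fin aT rT ph T i)) => -> end.
Ltac f2close := repeat (let H := fresh "Hf" in intro H; move/eqP: H => H; try by []; clear H); apply/eqP; by [].

Definition Z3E := (Z3_pp, Z3_mm, addrK, subrK, Z3_n1, Z3_n2, Z3_n3, Z3_n4, Z3_n5, Z3_n6, eqxx).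

Ltac simp := rewrite ?ffunE ?sum_ffunE ?big_bool /=; rewrite ?ffunE ?sum_ffunE ?big_bool /=;
  rewrite ?ffunE ?sum_ffunE ?big_bool /=; rewrite ?Z3E /=.

Lemma d0E (f : A) : d0 f = [ffun a => shift a f - f].
Proof. apply/ffunP => a; apply/ffunP => i; rewrite !ffunE. by rewrite F2_add. Qed.


Lemma ip_bimod : is_bimod_map_A ip.
Proof.
split; [|split].
- move=> x y; apply/ffunP => i; rewrite /ip /ipc /cst; simp; ring.
- move=> f x; apply/ffunP => i; rewrite /ip /ipc /cst /amul; simp; ring.
- move=> f x; apply/ffunP => i; rewrite /ip /ipc /cst /amul; simp; ring.
Qed.

Lemma gmet_QM : is_quantum_metric gmet.
Proof.
split.
  apply/ffunP => i; rewrite /wedge /gmet /ee /cst; simp; ring.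
exists ip; split; first exact: ip_bimod.
split => w; apply/ffunP => c; apply/ffunP => i;
  rewrite /apply11 /ip /gmet /ipc /cst /e /ee; case: c; simp; rewrite ?mulr0 ?mul0r ?mulr1 ?mul1r ?addr0 ?add0r; ring.
Qed.

Lemma QM_unique g : is_quantum_metric g -> g = gmet.
Proof.
case=> _ [ipm [[ipD [ipL ipR]] [H1 _]]].
have ip_diag : forall c, ipm (ee c c) = 0.
  move=> c; apply/ffunP => i.
  have := ipR [ffun j => if j == i then 1 else 0] (ee c c).
  have -> : ract2 (ee c c) [ffun j => if j == i then 1 else 0] =
     lact2 (shift c (shift c [ffun j => if j == i then 1 else 0])) (ee c c).
    apply/ffunP => [[x y]]; apply/ffunP => k; rewrite /ee /cst; simp.
    case: eqP => [[-> ->]|_]; simp; ring.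
  rewrite ipL => /(congr1 (fun T : A => T i)).
  by case: c; simp; rewrite mul0r mulr1 => <-.
have key : forall c b i, \sum_(a : bool) g (a, b) (i + (if c then 1 else -1)) * ipm (ee c a) i
      = if c == b then 1 else 0.
  have E : forall c a b', tens11 (e c) (lact1 (g (a, b')) (e a)) = lact2 (shift c (g (a,b'))) (ee c a).
    move=> c a b'; apply/ffunP => [[x y]]; apply/ffunP => k; rewrite /ee /e /cst; simp.
    by case: x; case: y; case: c; case: a; simp; ring.
  move=> c b i.
  have := congr1 (fun w : Om1 => w b i) (H1 (e c)).
  rewrite /apply11 /=.
  under eq_bigr do under eq_bigr do rewrite E ipL.
  rewrite /e /cst; simp.
  by case: c; case: b; simp; rewrite ?ip_diag; simp=> H; apply: etrans H; ring.
apply/ffunP => [[x y]]; apply/ffunP => j.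
rewrite /gmet /ee /cst; simp.
have K1 := key (~~x) y (j - (if ~~x then 1 else -1)).
have K2 := key (~~x) (~~y) (j - (if ~~x then 1 else -1)).
rewrite subrK in K1 K2. move: K1 K2.
by case: x; case: y; simp; rewrite ?ip_diag; simp; rewrite ?mulr0 ?mul0r ?addr0 ?add0r; f2gen; f2close.
Qed.

Lemma part1 : forall g' : Om11, is_quantum_metric g' <-> g' = gmet.
Proof. by move=> g'; split; [apply: QM_unique | move=> ->; apply: gmet_QM]. Qed.



Lemma Om1_dec (w : Om1) : w = lact1 (w true) (e true) + lact1 (w false) (e false).
Proof. apply/ffunP => c; apply/ffunP => i; rewrite /e /cst; case: c; simp; ring. Qed.

Lemma Om11_dec (X : Om11) : X = lact2 (X (true,true)) (ee true true) + lact2 (X (true,false)) (ee true false)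
  + (lact2 (X (false,true)) (ee false true) + lact2 (X (false,false)) (ee false false)).
Proof. apply/ffunP => [[c d]]; apply/ffunP => i; rewrite /ee /cst; case: c; case: d; simp; ring. Qed.

Lemma add0_eq (U V : zmodType) (f : U -> V) : (forall x y, f (x + y) = f x + f y) -> f 0 = 0.
Proof. move=> H; have E := H 0 0; rewrite addr0 in E. by apply: (addrI (f 0)); rewrite addr0 -E. Qed.

Lemma conn_decomp nabla sigma : is_bimod_conn nabla sigma -> forall w,
  nabla w = tens11 (d0 (w true)) (e true) + lact2 (w true) (nabla (e true))
          + (tens11 (d0 (w false)) (e false) + lact2 (w false) (nabla (e false))).
Proof. case=> nD [nL _] w. by rewrite {1}(Om1_dec w) nD !nL. Qed.

Lemma sigma_pt sigma : is_bimod_map sigma -> forall X c d i,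
  sigma X (c,d) i = X (true,true) i * sigma (ee true true) (c,d) i
                  + X (true,false) i * sigma (ee true false) (c,d) i
                  + (X (false,true) i * sigma (ee false true) (c,d) i
                  + X (false,false) i * sigma (ee false false) (c,d) i).
Proof. case=> sD [sL _] X c d i. by rewrite {1}(Om11_dec X) !sD !sL; simp. Qed.

Lemma part4 : forall nabla1 nabla2, is_QLC nabla1 gmet -> is_QLC nabla2 gmet ->
     nabla1 (e true) = nabla2 (e true) -> nabla1 (e false) = nabla2 (e false) ->
     forall w, nabla1 w = nabla2 w.
Proof.
move=> n1 n2 [s1 [_ [C1 _]]] [s2 [_ [C2 _]]] E1 E2 w.
by rewrite (conn_decomp C1) (conn_decomp C2) E1 E2.
Qed.

Definition cls (c d : bool) : nat := if c == d then (if c then 2 else 1) else 0.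

Lemma ract1_e a f : ract1 (e a) f = lact1 (shift a f) (e a).
Proof. apply/ffunP => x; apply/ffunP => k; rewrite /e /cst; case: x; case: a; simp; ring. Qed.

Lemma S_formula nabla sigma : is_bimod_map sigma -> is_bimod_conn nabla sigma -> forall a y c d i,
  sigma (ee a y) (c,d) i = (if (d == a) && (c == y) then 1 else 0)
     + nabla (e a) (c,d) i * (if cls c d == cls a y then 1 else 0).
Proof.
move=> sB nC a y c d i.
case: (nC) => _ [nL nR].
have H := nR [ffun k => if k == (if y then (if a then i+1 else i-1) + 1 else (if a then i+1 else i-1) - 1) then 1 else 0] (e a).
rewrite ract1_e nL in H.
move/(congr1 (fun T : Om11 => T (c,d) i)): H => /=.
simp; rewrite (sigma_pt sB (tens11 _ _)) d0E /e /cst.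
case: a; case: y; case: c; case: d; simp; rewrite ?mulr0 ?mul0r ?mulr1 ?mul1r ?addr0 ?add0r ?oppr0 ?subr0 ?sub0r.
all: f2gen; f2close.
Qed.

Lemma gm_l a b : lact1 (gmet (a,b)) (e a) = if a != b then e a else 0.
Proof. apply/ffunP => x; apply/ffunP => k; rewrite /gmet /e /ee /cst; case: a; case: b; case: x; simp; ring. Qed.

Lemma tens21_0 v : tens21 0 v = 0.
Proof. apply/ffunP => x; apply/ffunP => k; simp; ring. Qed.
Lemma tens12_0 T : tens12 0 T = 0.
Proof. apply/ffunP => x; apply/ffunP => k; simp; ring. Qed.
Lemma sigma_id_0 sigma : is_bimod_map sigma -> sigma_id sigma 0 = 0.
Proof.
case=> sD _; rewrite /sigma_id big1 // => c _.
have -> : [ffun ab : bool * bool => (0 : Om111) (ab.1, ab.2, c)] = 0.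
  by apply/ffunP => x; rewrite !ffunE.
by rewrite (add0_eq sD) tens21_0.
Qed.



Lemma MC_pt nabla sigma : is_bimod_map sigma -> is_bimod_conn nabla sigma ->
  metric_compat_term nabla sigma gmet = 0 -> forall x y z i,
  nabla (e (~~ z)) (x,y) i
  + (nabla (e false) (true, z) (i+1) * sigma (ee true true) (x,y) i
     + nabla (e false) (false, z) (i+1) * sigma (ee true false) (x,y) i)
  + (nabla (e true) (true, z) (i-1) * sigma (ee false true) (x,y) i
     + nabla (e true) (false, z) (i-1) * sigma (ee false false) (x,y) i) = 0.
Proof.
move=> sB nC; case: (nC) => nD _.
rewrite /metric_compat_term /apply11 !big_bool !gm_l /= !(add0_eq nD) !tens21_0 !tens12_0 !(sigma_id_0 sB).
rewrite !addr0 !add0r => H x y z i.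
move/(congr1 (fun X : Om111 => X (x,y,z) i)): H => /=.
simp. rewrite !(sigma_pt sB (finfun (fun ab => tens12 _ _ _))). simp.
case: z; simp; move=> H; apply: etrans H; ring.
Qed.




Ltac zsimp := rewrite ?mulr0 ?mul0r ?mulr1 ?mul1r ?addr0 ?add0r ?oppr0 ?subr0 ?sub0r.

Lemma part2 : forall nabla, is_QLC nabla gmet ->
     exists alpha beta : 'F_2,
       nabla (e true) = lact2 (cst alpha) (ee false false) /\
       nabla (e false) = lact2 (cst beta) (ee true true).
Proof.
move=> nabla [sigma [sB [nC [Tor MC]]]].
have SF := S_formula sB nC.
have MP := MC_pt sB nC MC.
have TE : forall a i, nabla (e a) (true,false) i = nabla (e a) (false,true) i.
  move=> a i. have := congr1 (fun k : A => k i) (Tor (e a)).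
  rewrite /torsion /wedge /d1 /=; simp.
  by case: a; f2gen; f2close.
have hA1 : forall i, nabla (e true) (true,true) i = 0.
  move=> i; have M := MP true true false i; rewrite !SF /= in M; move: M; zsimp.
  f2gen; f2close.
have hQ : forall i, nabla (e false) (true,false) i = 0.
  move=> i; have M := MP true true false (i - 1); rewrite !SF /= subrK in M; move: M; zsimp.
  f2gen; f2close.
have hB2 : forall i, nabla (e false) (false,false) i = 0.
  move=> i; have M := MP false false true i; rewrite !SF /= in M; move: M; zsimp.
  f2gen; f2close.
have hP : forall i, nabla (e true) (false,true) i = 0.
  move=> i; have M := MP false false true (i + 1); rewrite !SF /= addrK in M; move: M; zsimp.
  f2gen; f2close.
have hA2 : forall i, nabla (e true) (false,false) i = nabla (e true) (false,false) (i - 1).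
  move=> i; have M := MP false false false i; rewrite !SF /= !hB2 in M; move: M; zsimp.
  f2gen; f2close.
have hB1 : forall i, nabla (e false) (true,true) i = nabla (e false) (true,true) (i + 1).
  move=> i; have M := MP true true true i; rewrite !SF /= !hA1 in M; move: M; zsimp.
  f2gen; f2close.
have cA2 : forall i, nabla (e true) (false,false) i = nabla (e true) (false,false) 0.
  move=> i; case: (Z3_cases i) => [->|[->|->]]; first done.
    by apply: etrans (hA2 _) _; rewrite addrK.
  apply: etrans (hA2 _) _; rewrite Z3_mm; apply: etrans (hA2 _) _; by rewrite addrK.
have cB1 : forall i, nabla (e false) (true,true) i = nabla (e false) (true,true) 0.
  move=> i; case: (Z3_cases i) => [->|[->|->]]; first done.
    apply: etrans (hB1 _) _; rewrite Z3_pp; apply: etrans (hB1 _) _; by rewrite subrK.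
  by apply: etrans (hB1 _) _; rewrite subrK.
exists (nabla (e true) (false,false) 0), (nabla (e false) (true,true) 0).
split; apply/ffunP => [[c d]]; apply/ffunP => i; rewrite /ee /cst; case: c; case: d; simp; zsimp.
- by rewrite hA1.
- by rewrite TE hP.
- by rewrite hP.
- by rewrite cA2.
- by rewrite cB1.
- by rewrite hQ.
- by rewrite -TE hQ.
- by rewrite hB2.
Qed.



Definition Gam (al be : 'F_2) (a : bool) : Om11 :=
  if a then lact2 (cst al) (ee false false) else lact2 (cst be) (ee true true).
Definition nab (al be : 'F_2) (w : Om1) : Om11 :=
  tens11 (d0 (w true)) (e true) + lact2 (w true) (Gam al be true)
  + (tens11 (d0 (w false)) (e false) + lact2 (w false) (Gam al be false)).
Definition flip (X : Om11) : Om11 := [ffun cd => X (cd.2, cd.1)].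

Lemma nab_e al be a : nab al be (e a) = Gam al be a.
Proof.
apply/ffunP => [[c d]]; apply/ffunP => i; rewrite /nab /Gam !d0E /e /ee /cst.
by case: a; case: c; case: d; simp; ring.
Qed.

Lemma flip_bimod : is_bimod_map flip.
Proof.
split; [|split].
- by move=> x y; apply/ffunP => [[c d]]; apply/ffunP => i; simp.
- by move=> f x; apply/ffunP => [[c d]]; apply/ffunP => i; rewrite /amul; simp.
- by move=> f x; apply/ffunP => [[c d]]; apply/ffunP => i; rewrite /amul; case: c; case: d; simp.
Qed.

Lemma nab_conn al be : is_bimod_conn (nab al be) flip.
Proof.
split; [|split].
- move=> w v; apply/ffunP => [[c d]]; apply/ffunP => i; rewrite /nab /Gam !d0E /e /ee /cst /amul.
  by case: c; case: d; simp; ring.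
- move=> f w; apply/ffunP => [[c d]]; apply/ffunP => i; rewrite /nab /Gam !d0E /e /ee /cst /amul.
  by case: c; case: d; simp; ring.
- move=> f w; apply/ffunP => [[c d]]; apply/ffunP => i; rewrite /nab /Gam !d0E /e /ee /cst /amul.
  by case: c; case: d; simp; ring.
Qed.

Lemma nab_tors al be w : torsion (nab al be) w = 0.
Proof.
apply/ffunP => i; rewrite /torsion /wedge /d1 /nab /Gam; simp.
rewrite /e /ee /cst /amul; simp; ring.
Qed.

Lemma nab_mc al be : metric_compat_term (nab al be) flip gmet = 0.
Proof.
rewrite /metric_compat_term /apply11 !big_bool !gm_l /= !nab_e.
apply/ffunP => [[[x y] z]]; apply/ffunP => i.
rewrite /sigma_id /Gam /flip /e /ee /cst; simp.
case: (F2_cases al) => ->; case: (F2_cases be) => ->; case: x; case: y; case: z; simp; apply/eqP; by [].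
Qed.

Lemma part3 : forall alpha beta : 'F_2, exists nabla, is_QLC nabla gmet /\
       nabla (e true) = lact2 (cst alpha) (ee false false) /\
       nabla (e false) = lact2 (cst beta) (ee true true).
Proof.
move=> al be; exists (nab al be); split; last by rewrite !nab_e.
exists flip; split; first exact: flip_bimod.
split; first exact: nab_conn.
split; [exact: nab_tors | exact: nab_mc].
Qed.



Lemma LA k p q a b : lact2 (cst k) (ee p q) (a,b) = cst (k * (if (a,b) == (p,q) then 1 else 0)).
Proof. by apply/ffunP => i; rewrite /ee /cst; simp. Qed.

Lemma LB k a : d1 (lact1 (cst k) (e a)) = 0.
Proof. apply/ffunP => i; rewrite /d1 !big_bool !d0E /wedge /e /cst; case: a; simp; ring. Qed.

Lemma LC v : tens2_1 0 v = 0.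
Proof. apply/ffunP => c; apply/ffunP => i; simp; ring. Qed.

Lemma LD k m a p q : wedge_id (tens12 (lact1 (cst k) (e a)) (lact2 (cst m) (ee p q)))
  = lact1 (cst (k * m * ((if (a,p) == (true,false) then 1 else 0) - (if (a,p) == (false,true) then 1 else 0)))) (e q).
Proof.
apply/ffunP => c; apply/ffunP => i; rewrite /e /ee /cst.
by case: a; case: p; case: q; case: c; simp; ring.
Qed.

Lemma LE s k b : ilift_id s (lact1 (cst k) (e b)) =
  [ffun xyz => cst (k * (if xyz == (s, ~~ s, b) then 1 else 0))].
Proof.
apply/ffunP => [[[x y] z]]; apply/ffunP => i; rewrite /ilift_id /ilift /e /ee /cst.
by case: s; case: b; case: x; case: y; case: z; simp; ring.
Qed.

Lemma LF a (f : bool * bool * bool -> 'F_2) :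
  tens13 (e a) [ffun xyz => cst (f xyz)] =
  [ffun abcd => cst ((if abcd.1.1.1 == a then 1 else 0) * f (abcd.1.1.2, abcd.1.2, abcd.2))].
Proof. by apply/ffunP => [[[[x y] z] w]]; apply/ffunP => i; rewrite /e /cst; simp. Qed.

Lemma LG X : tens13 0 X = 0.
Proof. apply/ffunP => x; apply/ffunP => i; simp; ring. Qed.

Lemma LH k p q : ip (lact2 (cst k) (ee p q)) = cst (k * (if p != q then 1 else 0)).
Proof. apply/ffunP => i; rewrite /ip /ipc /ee /cst; case: p; case: q; simp; ring. Qed.

Lemma part5 : forall nabla (alpha beta : 'F_2), is_QLC nabla gmet ->
     nabla (e true) = lact2 (cst alpha) (ee false false) ->
     nabla (e false) = lact2 (cst beta) (ee true true) ->
     (forall s : bool, curvature nabla (e s) = lact1 (cst (alpha * beta)) (e s)) /\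
     Ricci true nabla gmet = lact2 (cst (alpha * beta)) (ee false true) /\
     Ricci false nabla gmet = lact2 (cst (alpha * beta)) (ee true false) /\
     (forall s : bool, Rscalar s nabla gmet = cst (alpha * beta)).
Proof.
move=> nabla al be _ H1 H2.
have Hc : forall s, curvature nabla (e s) = lact1 (cst (al*be)) (e s).
  move=> s; rewrite /curvature /apply11 !big_bool.
  by case: s; rewrite ?H1 ?H2 !LA /= !LB !LC !LD /=; apply/ffunP => c; apply/ffunP => i; rewrite /e /cst; simp;
    case: (F2_cases al) => ->; case: (F2_cases be) => ->; case: c; simp; apply/eqP.
have HR : forall s, Ricci s nabla gmet = lact2 (cst (al * be)) (ee (~~ s) s).
  move=> s; rewrite /Ricci /apply11 !big_bool !gm_l /= !Hc !LE !LG !LF.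
  apply/ffunP => [[c d]]; apply/ffunP => i; rewrite /ip_id /ip /ipc /ee /cst; simp;
  case: (F2_cases al) => ->; case: (F2_cases be) => ->; case: s; case: c; case: d; simp; apply/eqP; by [].
split; first exact: Hc.
split; first exact: HR.
split; first exact: HR.
move=> s; rewrite /Rscalar HR LH.
by case: s => /=; apply/ffunP => i; rewrite /cst; simp; rewrite mulr1.
Qed.

Theorem proposition4p4 :
  (* g is the unique quantum metric *)
  (forall g' : Om11, is_quantum_metric g' <-> g' = gmet) /\
  (* every QLC is of the stated form *)
  (forall nabla, is_QLC nabla gmet ->
     exists alpha beta : 'F_2,
       nabla (e true) = lact2 (cst alpha) (ee false false) /\
       nabla (e false) = lact2 (cst beta) (ee true true)) /\
  (* each of the four forms is realised by a QLC *)
  (forall alpha beta : 'F_2, exists nabla, is_QLC nabla gmet /\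
       nabla (e true) = lact2 (cst alpha) (ee false false) /\
       nabla (e false) = lact2 (cst beta) (ee true true)) /\
  (* a QLC is determined by its values on e^+, e^- (so there are exactly four) *)
  (forall nabla1 nabla2, is_QLC nabla1 gmet -> is_QLC nabla2 gmet ->
     nabla1 (e true) = nabla2 (e true) -> nabla1 (e false) = nabla2 (e false) ->
     forall w, nabla1 w = nabla2 w) /\
  (* curvature, Ricci tensors and Ricci scalars *)
  (forall nabla (alpha beta : 'F_2), is_QLC nabla gmet ->
     nabla (e true) = lact2 (cst alpha) (ee false false) ->
     nabla (e false) = lact2 (cst beta) (ee true true) ->
     (forall s : bool, curvature nabla (e s) = lact1 (cst (alpha * beta)) (e s)) /\
     Ricci true nabla gmet = lact2 (cst (alpha * beta)) (ee false true) /\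
     Ricci false nabla gmet = lact2 (cst (alpha * beta)) (ee true false) /\
     (forall s : bool, Rscalar s nabla gmet = cst (alpha * beta))).
Proof.
split; first exact: part1.
split; first exact: part2.
split; first exact: part3.
split; first exact: part4.
exact: part5.
Qed.
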